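(* For each $m \ge 2$ let $F_m \in \mathbb{R}^3$ be the vector of uniform expected payoffs of the imbalanced $(m,3)$-RPS. Then there exist vectors $u_m \in \mathbb{R}^3$ such that, for every $m$, $u_m$ majorizes the vector of uniform expected payoffs of every $(m,3)$-RPS game, and $\|F_m - u_m\| \to 0$ as $m \to \infty$ (indeed at an exponential rate of order $m(2/3)^{m}$).
   Context: An $(m,n)$-RPS game is a symmetric, zero-sum, win/lose game with $m$ players and $n$ pure strategies (''objects''), played without collusion. The rules assign to every multiset $c$ of $m$ chosen objects a single winning object $\phi(c)\in c$; every player who chose $\phi(c)$ wins and every other player loses. If there are $m'$ winners, each winner receives payoff $\frac{m-m'}{m'}$ and each loser receives payoff $-1$. The uniform expected payoff of an object $o$ is the expected payoff of a player who chooses $o$ while each of the other $m-1$ players independently chooses an object uniformly at random. The vector of uniform expected payoffs lists these values over all objects; majorization is the standard majorization order on vectors (comparing sorted partial sums, with equal total sums). The imbalanced $(m,3)$-RPS has objects $R,P,S$ with the following rules: any multiset containing at least one $S$ and at least one $R$ is won by $R$; any multiset containing only $R$'s and $P$'s (with at least one of each) is won by $P$; any multiset containing only $P$'s and $S$'s (with at least one of each) is won by $S$; a multiset consisting of a single object type is won by that object. *)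

(* Defs.v *)
From HB Require Import structures.
From mathcomp Require Import all_boot all_order all_algebra.
From mathcomp Require Import all_classical all_reals all_analysis.
Set Implicit Arguments. Unset Strict Implicit. Unset Printing Implicit Defensive.
Import Order.TTheory GRing.Theory Num.Theory.
Import numFieldNormedType.Exports.
Local Open Scope ring_scope.

(* A multiset of objects from 'I_n is represented by its multiplicity function. *)
Definition rps_mset (n : nat) := {ffun 'I_n -> nat}.

(* phi is the rule of an (m,n)-RPS game: to every multiset c of m objects it
   assigns a winning object phi c that occurs in c. (Values of phi on
   functions that are not multisets of size m are irrelevant.) *)
Definition is_RPS_rule (m n : nat) (phi : rps_mset n -> 'I_n) : Prop :=
  forall c : rps_mset n, (\sum_(i < n) c i)%N = m -> (0 < c (phi c))%N.

Definition payoff (R : realFieldType) (m n : nat) (phi : rps_mset n -> 'I_n)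
    (c : rps_mset n) (o : 'I_n) : R :=
  let w := phi c in
  let m' := c w in
  if w == o then (m%:R - m'%:R) / m'%:R else -1.

(* Multiset of choices when the other m-1 players play profile s and the
   player under consideration plays o. *)
Definition profile_mset (m n : nat) (s : {ffun 'I_m.-1 -> 'I_n}) (o : 'I_n)
  : rps_mset n :=
  [ffun o' => (#|[set i | s i == o']| + (o' == o))%N].

Definition unif_payoff (R : realFieldType) (m n : nat)
    (phi : rps_mset n -> 'I_n) : 'rV[R]_n :=
  \row_(o < n) ((\sum_(s : {ffun 'I_m.-1 -> 'I_n})
                   payoff R m phi (profile_mset s o) o) / (n%:R ^+ m.-1)).

Definition topsum (R : realFieldType) (n : nat) (x : 'rV[R]_n) (k : nat) : R :=
  \sum_(a <- take k (sort (fun a b : R => b <= a) [seq x 0 i | i <- enum 'I_n])) a.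

Definition majorizes (R : realFieldType) (n : nat) (x y : 'rV[R]_n) : Prop :=
  \sum_(i < n) x 0 i = \sum_(i < n) y 0 i /\
  forall k, (k <= n)%N -> topsum y k <= topsum x k.

Definition oR : 'I_3 := @Ordinal 3 0 isT.
Definition oP : 'I_3 := @Ordinal 3 1 isT.
Definition oS : 'I_3 := @Ordinal 3 2 isT.

Definition imbalanced_rule (c : rps_mset 3) : 'I_3 :=
  if (0 < c oR)%N && (0 < c oS)%N then oR
  else if (0 < c oP)%N then
    (if (0 < c oR)%N then oP
     else if (0 < c oS)%N then oS
     else oP)
  else if (0 < c oR)%N then oR
  else oS.

(* Main.v *)
Require Import Defs.
From HB Require Import structures.
From mathcomp Require Import all_boot all_order all_algebra.
From mathcomp Require Import all_classical all_reals all_analysis.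
Import Order.TTheory GRing.Theory Num.Theory.
Import numFieldNormedType.Exports.
Local Open Scope ring_scope.
From mathcomp Require Import ring lra.

Section ZS.
Variable R : realFieldType.
Variables (n k : nat).

Definition cnt (t : {ffun 'I_k.+1 -> 'I_n}) : rps_mset n :=
  [ffun o' => #|[set x | t x == o']|].

Definition ext (j : 'I_k.+1) (o : 'I_n) (s : {ffun 'I_k -> 'I_n}) : {ffun 'I_k.+1 -> 'I_n} :=
  [ffun x => if unlift j x is Some i then s i else o].

Lemma card_nat_sum (T : finType) (P : pred T) :
  #|[set x | P x]| = (\sum_x (P x : nat))%N.
Proof.
rewrite cardsE -sum1_card big_mkcond /=; apply: eq_bigr => x _.
by rewrite unfold_in; case: (P x).
Qed.

Lemma cnt_ext j o s : cnt (ext j o s) = profile_mset (m := k.+1) s o.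
Proof.
apply/ffunP => o'; rewrite !ffunE !card_nat_sum (bigD1_ord j) //= addnC.
rewrite ffunE unlift_none (eq_sym o); congr (_ + _)%N; apply: eq_bigr => i _.
by rewrite ffunE liftK.
Qed.

Definition hh (j : 'I_k.+1) (t : {ffun 'I_k.+1 -> 'I_n}) : 'I_n * {ffun 'I_k -> 'I_n} :=
  (t j, [ffun i => t (lift j i)]).

Lemma hh_bij j : bijective (hh j).
Proof.
exists (fun p => ext j p.1 p.2).
  move=> t; apply/ffunP => x; rewrite ffunE /=.
  by case: unliftP => [i ->|->]; rewrite ?ffunE.
move=> [a b]; rewrite /hh ffunE unlift_none; congr (_, _).
by apply/ffunP => i; rewrite !ffunE liftK.
Qed.

Lemma sum_split (F : 'I_n -> {ffun 'I_k -> 'I_n} -> R) j :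
  \sum_o \sum_s F o s = \sum_(t : {ffun 'I_k.+1 -> 'I_n}) F (t j) [ffun i => t (lift j i)].
Proof.
rewrite pair_big /= (reindex (hh j)) /=; last exact: onW_bij (hh_bij j).
by [].
Qed.

Lemma cnt_sum t : (\sum_o' cnt t o')%N = k.+1.
Proof.
under eq_bigr do rewrite ffunE card_nat_sum.
rewrite exchange_big /= -[RHS]card_ord -sum1_card; apply: eq_bigr => x _.
by rewrite (bigD1 (t x)) //= eqxx big1 // => o /negbTE; rewrite eq_sym => ->.
Qed.

Lemma sum_by_value (c : rps_mset n) (f : 'I_n -> R) (t : {ffun 'I_k.+1 -> 'I_n}) :
  \sum_j f (t j) = \sum_o' (cnt t o')%:R * f o'.
Proof.
transitivity (\sum_j \sum_o' ((t j == o')%:R * f o')).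
  apply: eq_bigr => j _; rewrite (bigD1 (t j)) //= eqxx mul1r big1 ?addr0 //.
  by move=> o /negbTE; rewrite eq_sym => ->; rewrite mul0r.
rewrite exchange_big; apply: eq_bigr => o _.
by rewrite -mulr_suml -natr_sum ffunE card_nat_sum.
Qed.

Lemma zero_sum_profile (phi : rps_mset n -> 'I_n) :
  is_RPS_rule k.+1 phi -> forall t,
  \sum_j payoff R k.+1 phi (cnt t) (t j) = 0.
Proof.
move=> H t; rewrite (sum_by_value (cnt t)).
have Hs := cnt_sum t.
have Hw := H _ Hs.
set c := cnt t in Hs Hw *; set w := phi c.
rewrite (bigD1 w) //= /payoff -/w eqxx.
rewrite (eq_bigr (fun o => - (c o)%:R)); last first.
  by move=> o /negbTE; rewrite eq_sym => ->; rewrite mulrN1.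
rewrite sumrN -natr_sum.
move: Hs; rewrite (bigD1 w) //= => Hs.
have -> : (\sum_(i | i != w) c i)%N = (k.+1 - c w)%N by rewrite -Hs addKn.
rewrite mulrC -mulrA mulVf ?pnatr_eq0 -?lt0n // mulr1 natrB; last by rewrite -Hs leq_addr.
by rewrite subrr.
Qed.

Lemma zero_sum (phi : rps_mset n -> 'I_n) :
  is_RPS_rule k.+1 phi ->
  \sum_o \sum_(s : {ffun 'I_k -> 'I_n}) payoff R k.+1 phi (profile_mset (m := k.+1) s o) o = 0.
Proof.
move=> H.
have E : forall j : 'I_k.+1, \sum_o \sum_(s : {ffun 'I_k -> 'I_n}) payoff R k.+1 phi (profile_mset (m := k.+1) s o) o
   = \sum_(t : {ffun 'I_k.+1 -> 'I_n}) payoff R k.+1 phi (cnt t) (t j).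
  move=> j; rewrite (sum_split (fun o s => payoff R k.+1 phi (profile_mset (m := k.+1) s o) o) j).
  apply: eq_bigr => t _; congr (payoff _ _ _ _); rewrite -(cnt_ext j); congr cnt.
  by apply/ffunP=> x; rewrite ffunE; case: unliftP => [i ->|->]; rewrite ?ffunE.
apply: (@mulIf _ (k.+1)%:R); first by rewrite pnatr_eq0.
have -> : forall x : R, x * (k.+1)%:R = \sum_(j < k.+1) x.
  by move=> x; rewrite sumr_const card_ord mulr_natr.
rewrite mul0r.
rewrite (eq_bigr _ (fun j _ => E j)) exchange_big /=.
by rewrite big1 // => t _; apply: zero_sum_profile.
Qed.
End ZS.

Lemma topsum3 (R : realFieldType) (x : 'rV[R]_3) : exists a b c : R,
  [/\ topsum x 1 = a, topsum x 2 = a + b, topsum x 3 = \sum_i x 0 i, topsum x 0 = 0 &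
   [/\ a + b + c = \sum_i x 0 i, (exists i, x 0 i = a), (exists i, x 0 i = c),
       forall i, c <= x 0 i & forall i, x 0 i <= a]].
Proof.
rewrite /topsum.
set l := [seq x 0 i | i <- enum 'I_3].
have Hp := permEl (perm_sort (fun a b : R => b <= a) l).
have Hs := sort_sorted (fun a b : R => le_total b a) l.
have Hsz : size (sort (fun a b : R => b <= a) l) = 3 by rewrite size_sort size_map size_enum_ord.
have Hl : \sum_(y <- l) y = \sum_i x 0 i by rewrite big_map big_enum.
have Hm : forall i, x 0 i \in sort (fun a b : R => b <= a) l.
  by move=> i; rewrite (perm_mem Hp) map_f // mem_enum.
move: Hp Hs Hsz Hm; case: (sort _ l) => [|a [|b [|c [|d t]]]] //= Hp /and3P[Hba Hcb _] _ Hm.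
exists a, b, c.
have Hsum : a + b + c = \sum_i x 0 i by rewrite -Hl -(perm_big _ Hp) /= !big_cons big_nil addr0 addrA.
have Hx : forall i, [\/ x 0 i = a, x 0 i = b | x 0 i = c].
  by move=> i; move: (Hm i); rewrite !inE => /or3P[/eqP|/eqP|/eqP] H; [exact: Or31|exact: Or32|exact: Or33].
have Hin : forall y, y \in [:: a; b; c] -> exists i, x 0 i = y.
  move=> y; rewrite (perm_mem Hp) => /mapP[i _ ->]; by exists i.
split; rewrite ?big_cons ?big_nil ?addr0 //.
- by rewrite -Hsum addrA.
split => //.
- by apply: Hin; rewrite inE eqxx.
- by apply: Hin; rewrite !inE eqxx !orbT.
- by move=> i; case: (Hx i) => ->; rewrite // (le_trans Hcb).
- by move=> i; case: (Hx i) => ->; rewrite // (le_trans Hcb).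
Qed.

Lemma I3_cases (i : 'I_3) : [\/ i = oR, i = oP | i = oS].
Proof.
case: i => [[|[|[|j]]] Hi] //.
- by apply: Or31; apply: val_inj.
- by apply: Or32; apply: val_inj.
- by apply: Or33; apply: val_inj.
Qed.

Section B.
Variable R : realFieldType.
Variable k : nat.
Local Notation m := k.+1.
Local Notation prof := (@profile_mset m 3).
Local Notation Fn := {ffun 'I_k -> 'I_3}.

Definition aa (s : Fn) (o : 'I_3) : R :=
  (m%:R - (prof s o o)%:R) / (prof s o o)%:R.

Lemma prof_self (s : Fn) o : (0 < prof s o o)%N.
Proof. by rewrite ffunE eqxx addn1. Qed.

Lemma prof_le (s : Fn) o : (prof s o o <= m)%N.
Proof.
rewrite ffunE eqxx addn1 ltnS.
by apply: leq_trans (max_card _) _; rewrite card_ord.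
Qed.

Lemma aa_ge0 s o : 0 <= aa s o.
Proof.
rewrite /aa divr_ge0 // ?subr_ge0 ?ler_nat ?prof_le //.
Qed.

Lemma aa_le s o : aa s o <= m%:R.
Proof.
rewrite /aa ler_pdivrMr ?ltr0n ?prof_self //.
apply: le_trans (_ : m%:R <= _); first by rewrite lerBlDr lerDl.
by rewrite ler_peMr // ler1n prof_self.
Qed.

Lemma payoff_le (phi : rps_mset 3 -> 'I_3) s o :
  payoff R m phi (prof s o) o <= aa s o.
Proof.
rewrite /payoff; case: eqP => [->|_] //.
by apply: le_trans (aa_ge0 s o); rewrite lerN10.
Qed.

Lemma payoff_ge (phi : rps_mset 3 -> 'I_3) (c : rps_mset 3) o :
  -1 <= payoff R m phi c o.
Proof.
rewrite /payoff; case: eqP => _ //.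
have [->|H] := eqVneq (c (phi c)) 0%N; first by rewrite invr0 mulr0 lerN10.
by rewrite mulrBl mulfV ?pnatr_eq0 // lerBrDl addrC addNr divr_ge0.
Qed.

Lemma aa_sym (o : 'I_3) : \sum_(s : Fn) aa s o = \sum_(s : Fn) aa s oR.
Proof.
pose t := fun x : 'I_3 => if x == o then oR else if x == oR then o else x.
have tK : involutive t.
  move=> x; rewrite /t.
  by case: (I3_cases o) => ->; case: (I3_cases x) => ->.
have tinj := inv_inj tK.
have to : t o = oR by rewrite /t eqxx.
have toR : t oR = o by rewrite -to tK.
rewrite (reindex_inj (h := fun s : Fn => [ffun i => t (s i)])); last first.
  move=> s1 s2 /ffunP H; apply/ffunP => i; move: (H i); rewrite !ffunE.
  exact: tinj.
apply: eq_bigr => s _; rewrite /aa !ffunE !eqxx; congr ((_ - _%:R) / _%:R); congr (_ + _)%N;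
  apply: eq_card => i; rewrite !inE ffunE -{1}toR (inj_eq tinj) //.
Qed.

Lemma card_Fn : #|{: Fn}| = (3 ^ k)%N.
Proof. by rewrite card_ffun !card_ord. Qed.


Definition AA : R := (\sum_(s : Fn) aa s oR) / (3%N%:R ^+ k).

Lemma unifE (phi : rps_mset 3 -> 'I_3) (o : 'I_3) : unif_payoff R m phi 0 o =
  (\sum_(s : Fn) payoff R m phi (prof s o) o) / (3%N%:R ^+ k).
Proof. by rewrite mxE. Qed.

Lemma pos3 : 0 < (3%N%:R : R) ^+ k.
Proof. by rewrite exprn_gt0 // ltr0n. Qed.

Lemma unif_le (phi : rps_mset 3 -> 'I_3) (o : 'I_3) : unif_payoff R m phi 0 o <= AA.
Proof.
rewrite unifE /AA ler_pM2r ?invr_gt0 ?pos3 // -(aa_sym o).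
by apply: ler_sum => s _; apply: payoff_le.
Qed.

Lemma sum_const_Fn (x : R) : \sum_(s : Fn) x = x * (3%N%:R ^+ k).
Proof. by rewrite sumr_const card_Fn -natrX mulr_natr. Qed.

Lemma unif_ge (phi : rps_mset 3 -> 'I_3) (o : 'I_3) : -1 <= unif_payoff R m phi 0 o.
Proof.
rewrite unifE ler_pdivlMr ?pos3 // -sum_const_Fn.
by apply: ler_sum => s _; apply: payoff_ge.
Qed.

Lemma card_sum (T : finType) (A : {pred T}) : (\sum_(x : T) ((x \in A) : nat))%N = #|A|.
Proof.
rewrite -sum1_card [RHS]big_mkcond /=; apply: eq_bigr => x _.
by case: (x \in A).
Qed.

Lemma sum_ind (x : 'I_3) : \sum_(s : Fn) ((s \in ffun_on (predC1 x)) : nat)%:R = (2 ^ k)%:R :> R.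
Proof.
rewrite -natr_sum card_sum card_ffun_on cardC1 !card_ord //.
Qed.

Lemma pos_ex (s : Fn) (x : 'I_3) o : (exists i, s i == x) -> (0 < prof s o x)%N.
Proof.
move=> [i Hi]; rewrite ffunE; apply: leq_trans (leq_addr _ _).
by apply/card_gt0P; exists i; rewrite inE.
Qed.

Lemma bound_gen (f : Fn -> R) (x : 'I_3) :
  (forall s, 0 <= f s) ->
  (forall s : Fn, (exists i, s i == x) -> f s = 0) ->
  (forall s, f s <= (m.+1)%:R) ->
  \sum_(s : Fn) f s <= (m.+1)%:R * (2 ^ k)%:R.
Proof.
move=> H0 Hz Hb; rewrite -(sum_ind x) mulr_sumr; apply: ler_sum => s _.
have [Hex|Hnex] := boolP [exists i, s i == x].
  by move/existsP: Hex => /Hz ->; rewrite mulr_ge0 ?ler0n.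
have -> : s \in ffun_on (predC1 x).
  apply/ffun_onP => i; rewrite !inE; apply: contraNN Hnex => Hi.
  by apply/existsP; exists i.
by rewrite mulr1.
Qed.

Lemma imbR_ub :
  AA - unif_payoff R m imbalanced_rule 0 oR <= (m.+1)%:R * (2 ^ k)%:R / (3%N%:R ^+ k).
Proof.
rewrite unifE /AA -mulrBl ler_pM2r ?invr_gt0 ?pos3 // -sumrB.
apply: (bound_gen _ oS).
- by move=> s; rewrite subr_ge0 payoff_le.
- move=> s Hs; apply/eqP; rewrite subr_eq0; apply/eqP.
  have HR : (0 < prof s oR oR)%N by apply: prof_self.
  have HS := pos_ex s oS oR Hs.
  by rewrite /payoff /imbalanced_rule HR HS /=.
- move=> s; rewrite -natr1; apply: lerD; first exact: aa_le.
  by rewrite lerNl payoff_ge.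
Qed.

Lemma imbS_ub :
  unif_payoff R m imbalanced_rule 0 oS + 1 <= (m.+1)%:R * (2 ^ k)%:R / (3%N%:R ^+ k).
Proof.
rewrite unifE.
have -> : forall a : R, a / (3%N%:R ^+ k) + 1 = (a + \sum_(s : Fn) 1) / (3%N%:R ^+ k).
  by move=> a; rewrite sum_const_Fn mul1r mulrDl mulfV // gt_eqF ?pos3.
rewrite ler_pM2r ?invr_gt0 ?pos3 // -big_split /=.
apply: (bound_gen _ oR).
- by move=> s; rewrite -lerBlDr sub0r payoff_ge.
- move=> s Hs; apply/eqP; rewrite addr_eq0; apply/eqP.
  have HS : (0 < prof s oS oS)%N by apply: prof_self.
  have HR := pos_ex s oR oS Hs.
  by rewrite /payoff /imbalanced_rule HR HS.
- move=> s; rewrite -natr1; apply: lerD => //.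
  by apply: le_trans (payoff_le _ _ _) (aa_le _ _).
Qed.

End B.

Lemma sum3 (R : realFieldType) (F : 'I_3 -> R) : \sum_i F i = F oR + F oP + F oS.
Proof.
rewrite !big_ord_recl big_ord0 addr0 addrA.
by congr (F _ + F _ + F _); apply: val_inj.
Qed.

Lemma sum3n (F : 'I_3 -> nat) : (\sum_i F i)%N = (F oR + F oP + F oS)%N.
Proof.
rewrite !big_ord_recl big_ord0 addn0 addnA.
by congr (F _ + F _ + F _)%N; apply: val_inj.
Qed.

Lemma imb_rule m : (0 < m)%N -> is_RPS_rule m imbalanced_rule.
Proof.
move=> Hm c; rewrite sum3n => Hs.
rewrite /imbalanced_rule.
case HR: (0 < c oR)%N; case HS: (0 < c oS)%N; case HP: (0 < c oP)%N => //=;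
  rewrite ?HR ?HS ?HP //.
move: HR HS HP; rewrite !lt0n => /negbFE/eqP HR /negbFE/eqP HS /negbFE/eqP HP.
by move: Hm; rewrite -Hs HR HS HP.
Qed.

Definition uu (R : realFieldType) (m : nat) : 'rV[R]_3 :=
  \row_(i < 3) (if i == oR then AA R m.-1 else if i == oP then 1 - AA R m.-1 else -1).

Lemma unif_sum0 (R : realFieldType) k (phi : rps_mset 3 -> 'I_3) :
  is_RPS_rule k.+1 phi -> \sum_i unif_payoff R k.+1 phi 0 i = 0.
Proof.
move=> H; rewrite (eq_bigr _ (fun i _ => unifE R k phi i)) -mulr_suml.
by rewrite zero_sum // mul0r.
Qed.

Lemma uu_sum (R : realFieldType) m : \sum_i uu R m 0 i = 0.
Proof. rewrite sum3 !mxE /=. lra. Qed.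

Lemma uu_R (R : realFieldType) m : uu R m 0 oR = AA R m.-1.
Proof. by rewrite mxE. Qed.
Lemma uu_S (R : realFieldType) m : uu R m 0 oS = -1.
Proof. by rewrite mxE. Qed.

Lemma major (R : realFieldType) k (phi : rps_mset 3 -> 'I_3) :
  is_RPS_rule k.+1 phi -> majorizes (uu R k.+1) (unif_payoff R k.+1 phi).
Proof.
move=> H; split; first by rewrite uu_sum unif_sum0.
have [a [b [c [y1 y2 y3 y0 [ys [i yi] [j yj] yc ya]]]]] := topsum3 R (unif_payoff R k.+1 phi).
have [a' [b' [c' [x1 x2 x3 x0 [xs [i' xi] [j' xj] xc xa]]]]] := topsum3 R (uu R k.+1).
have sy := unif_sum0 R k phi H; have sx := uu_sum R k.+1.
move=> [|[|[|[|q]]]] // _.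
- by rewrite x0 y0.
- rewrite x1 y1 -yi; apply: le_trans (unif_le R k phi i) _.
  by have := xa oR; rewrite uu_R.
- rewrite x2 y2.
  have h1 := unif_ge R k phi j; have h2 := xc oS; rewrite uu_S in h2.
  rewrite yj in h1. lra.
- by rewrite x3 y3 sx sy.
Qed.

Lemma imb_norm (R : realFieldType) k :
  `|unif_payoff R k.+1 imbalanced_rule - uu R k.+1| <= (k.+2)%:R * (2 ^ k)%:R / (3%N%:R ^+ k).
Proof.
have hR1 := unif_le R k imbalanced_rule oR; have hR2 := imbR_ub R k.
have hS1 := unif_ge R k imbalanced_rule oS; have hS2 := imbS_ub R k.
have hs := unif_sum0 R k imbalanced_rule (imb_rule _ (ltn0Sn k)); rewrite sum3 in hs.
move: hR1 hR2 hS1 hS2 hs.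
set B := _ / _; set F := unif_payoff R k.+1 imbalanced_rule => hR1 hR2 hS1 hS2 hs.
have B0 : 0 <= B by lra.
rewrite /Num.Def.normr /= mx_normrE; apply: bigmax_le => // [[i j]] _ /=.
clearbody F; rewrite !mxE /= (ord1 i).
case: (I3_cases j) => -> /=; rewrite ler_norml; apply/andP; split; lra.
Qed.

Lemma lin_geom (R : realFieldType) n : n%:R <= 6 * (5/4 : R) ^+ n.
Proof.
elim: n => [|n IH]; first by rewrite expr0 mulr1; lra.
have h1 : 1 <= (5/4 : R) ^+ n by apply: exprn_ege1; lra.
rewrite exprS -natr1; lra.
Qed.

Lemma B_le (R : realFieldType) k :
  (k.+2)%:R * (2 ^ k)%:R / (3%N%:R ^+ k) <= 3 * (k.+1)%:R * ((2 : R) / 3) ^+ k.+1.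
Proof.
have E : ((2 : R) / 3) ^+ k.+1 = 2 / 3 * ((2%:R : R) ^+ k / 3%:R ^+ k).
  by rewrite exprS expr_div_n.
rewrite natrX E -mulrA.
have q0 : 0 <= (2%:R : R) ^+ k / 3%:R ^+ k by rewrite divr_ge0 // exprn_ge0.
move: q0; set q := _ / _ => q0.
have -> : (k.+2)%:R = (k%:R + 2 : R) by rewrite -[k.+2]addn2 natrD.
have -> : (k.+1)%:R = (k%:R + 1 : R) by rewrite -[k.+1]addn1 natrD.
have := mulr_ge0 (ler0n R k) q0.
nra.
Qed.

Lemma le18 (R : realFieldType) n :
  3 * n%:R * ((2 : R) / 3) ^+ n <= 18 * ((5/4 : R) * (2/3)) ^+ n.
Proof.
have -> : ((5/4 : R) * (2/3)) ^+ n = (5/4 : R) ^+ n * (2/3) ^+ n by rewrite exprMn.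
have h := lin_geom R n.
have q0 : 0 <= ((2 : R) / 3) ^+ n by apply: exprn_ge0; lra.
have h2 : 0 <= (6 * (5/4 : R) ^+ n - n%:R) * ((2 : R) / 3) ^+ n.
  by apply: mulr_ge0 => //; rewrite subr_ge0.
nra.
Qed.

Local Open Scope classical_set_scope.
Local Open Scope ring_scope.

Theorem mainTheorem2 (R : realType) :
  exists u : nat -> 'rV[R]_3,
    (forall m : nat, (2 <= m)%N ->
       forall phi : rps_mset 3 -> 'I_3, is_RPS_rule m phi ->
         majorizes (u m) (unif_payoff R m phi)) /\
    ((fun m : nat => `|unif_payoff R m imbalanced_rule - u m|) @ \oo --> (0 : R)) /\
    (exists C : R, forall m : nat, (2 <= m)%N ->
       `|unif_payoff R m imbalanced_rule - u m| <= C * m%:R * ((2 : R) / 3) ^+ m).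
Proof.
have Hb : forall m : nat, (2 <= m)%N ->
   `|unif_payoff R m imbalanced_rule - uu R m| <= 3 * m%:R * ((2 : R) / 3) ^+ m.
  move=> [//|k] _; apply: le_trans (imb_norm R k) _; exact: B_le.
exists (uu R); split; last split.
- by move=> [//|k] _ phi Hphi; apply: major.
- apply: (squeeze_cvgr (f := fun=> 0) (h := geometric 18 ((5/4 : R) * (2/3)))).
  + exists 2%N => // m /= Hm; rewrite normr_ge0 /=.
    exact: le_trans (Hb m Hm) (le18 R m).
  + exact: cvg_cst.
  + apply: cvg_geometric; rewrite ger0_norm; lra.
- by exists 3.
Qed.
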